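(* Fix an integer $r\ge 1$. Let $A=(a_{ij})$ be a real symmetric $n\times n$ matrix with $n\ge r$, with eigenvalues $\lambda_1\ge \lambda_2\ge\cdots\ge\lambda_n$, such that $0\le a_{ij}\le 1$ for all $i\neq j$ and $a_{ii}\ge 0$ for all $1\le i\le n$. Then \[ \lambda_{n-r+1}+\lambda_{n-r+2}+\cdots+\lambda_n\ \ge\ -\frac{\beta_r}{2}\,n . \]
   Context: For integers $N\ge r\ge 1$, let $\mathcal P_r(N)=\{Q\in\mathbb R^{N\times N}: Q^2=Q,\ Q^T=Q,\ \operatorname{rank}Q=r\}$ be the set of rank-$r$ orthogonal projections. Define \[ \beta_r(N)=\frac1N\max_{Q\in\mathcal P_r(N)}\sum_{i,j=1}^N |q_{ij}|,\qquad \beta_r=\sup_{N\ge r}\beta_r(N), \] where $Q=(q_{ij})$. *)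

(* Defs.v *)
From HB Require Import structures.
From mathcomp Require Import all_boot all_order all_algebra.
From mathcomp Require Import all_classical all_reals.
Set Implicit Arguments. Unset Strict Implicit. Unset Printing Implicit Defensive.
Import Order.TTheory GRing.Theory Num.Theory.
Local Open Scope ring_scope.
Local Open Scope classical_set_scope.

Definition is_proj_rank (R : realType) (N r : nat) (Q : 'M[R]_N) : Prop :=
  Q *m Q = Q /\ Q^T = Q /\ \rank Q = r.

Definition entry_l1 (R : realType) (N : nat) (Q : 'M[R]_N) : R :=
  \sum_(i < N) \sum_(j < N) `|Q i j|.

(* beta_r(N) = (1/N) max_{Q in P_r(N)} sum |q_ij|  (the max is attained, so
   it equals the supremum). *)
Definition beta_rN (R : realType) (r N : nat) : R :=
  sup [set (N%:R)^-1 * entry_l1 Q | Q in [set Q : 'M[R]_N | is_proj_rank r Q]].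

Definition beta_r (R : realType) (r : nat) : R :=
  sup [set beta_rN R r N | N in [set N : nat | (r <= N)%N]].

Definition sorted_eigenvalues (R : realType) (n : nat) (A : 'M[R]_n)
  (lam : 'I_n -> R) : Prop :=
  char_poly A = \prod_(i < n) ('X - (lam i)%:P) /\
  (forall i j : 'I_n, (i <= j)%N -> lam j <= lam i).

(* Main.v *)
Require Import Defs.
From HB Require Import structures.
From mathcomp Require Import all_boot all_order all_algebra.
From mathcomp Require Import all_classical all_reals.
From mathcomp Require Import complex sesquilinear spectral.
From mathcomp Require Import ring lra zify.
Import Order.TTheory GRing.Theory Num.Theory.
Local Open Scope ring_scope.

Lemma trace_pid (F : fieldType) n k : (k <= n)%N -> \tr (pid_mx k : 'M[F]_n) = k%:R.
Proof.
move=> hk; rewrite /mxtrace.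
rewrite (eq_bigr (fun i : 'I_n => if (i < k)%N then 1 else 0)); last by move=> i _; rewrite mxE eqxx /=; case: ifP.
rewrite -big_mkcond /= -(big_ord_widen n (fun _ => (1 : F)) hk).
by rewrite sumr_const card_ord.
Qed.

Lemma trace_idem (F : fieldType) n (P : 'M[F]_n) : P *m P = P -> \tr P = (\rank P)%:R.
Proof.
move=> PP.
have EP := mulmx_ebase P.
have Lu := col_ebase_unit P; have Uu := row_ebase_unit P.
set L := col_ebase P in EP Lu *; set U := row_ebase P in EP Uu *; set k := \rank P in EP *.
have hk : (k <= n)%N by apply: rank_leq_col.
have key : pid_mx k *m (U *m L) *m pid_mx k = pid_mx k :> 'M_n.
  have : L *m (pid_mx k *m (U *m L) *m pid_mx k) *m U = L *m pid_mx k *m U.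
    by rewrite EP -{1}PP -EP !mulmxA.
  move=> /(congr1 (mulmx^~ (invmx U))); rewrite !mulmxK //.
  by move=> /(congr1 (mulmx (invmx L))); rewrite !mulKmx.
rewrite -EP -mulmxA mxtrace_mulC -mulmxA.
rewrite -{1}(@pid_mx_id _ n n n k hk) -mulmxA mxtrace_mulC.
rewrite key.
exact: trace_pid.
Qed.

Lemma rowfree_unit (R : realFieldType) m n (B : 'M[R]_(m,n)) :
  row_free B -> B *m B^T \in unitmx.
Proof.
move=> fB; rewrite -row_free_unit -kermx_eq0; apply/eqP.
apply/row_matrixP => i; rewrite row0.
set x := row i _.
have hx : x *m (B *m B^T) = 0 by apply/sub_kermxP; exact: row_sub.
have hy : x *m B = 0.
  have : (x *m B) *m (x *m B)^T = 0 by rewrite trmx_mul mulmxA -(mulmxA x) hx mul0mx.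
  move: (x *m B) => y /matrixP /(_ 0 0); rewrite !mxE.
  under eq_bigr => j _ do rewrite mxE -expr2.
  move=> /eqP; rewrite psumr_eq0; last by move=> j _; rewrite sqr_ge0.
  move=> /allP H; apply/rowP => j; rewrite mxE.
  have := H j (mem_index_enum _); rewrite sqrf_eq0 => /eqP ->; by [].
by apply/eqP; rewrite -(mulmx_free_eq0 _ fB); apply/eqP.
Qed.

Lemma tr_lower (R : realFieldType) n (A P : 'M[R]_n) :
  (forall i j : 'I_n, i != j -> 0 <= A i j <= 1) -> (forall i, 0 <= A i i) ->
  P^T = P -> P *m P = P ->
  - (\sum_i \sum_j `|P i j|) / 2 <= \tr (A *m P).
Proof.
move=> hA hAd PT PP.
have sym i j : P j i = P i j by rewrite -{1}PT mxE.
have Pdiag i : 0 <= P i i.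
  rewrite -PP mxE; apply: sumr_ge0 => k _; rewrite sym -expr2; exact: sqr_ge0.
have Psum : 0 <= \sum_i \sum_j P i j.
  have -> : \sum_i \sum_j P i j = \sum_k (\sum_i P k i) ^+ 2.
    transitivity (\sum_i \sum_j \sum_k P i k * P k j).
      by apply: eq_bigr => i _; apply: eq_bigr => j _; rewrite -{1}PP mxE.
    transitivity (\sum_i \sum_k \sum_j P i k * P k j).
      by apply: eq_bigr => i _; rewrite exchange_big.
    rewrite exchange_big /=; apply: eq_bigr => k _.
    rewrite expr2 mulr_suml; apply: eq_bigr => i _.
    by rewrite mulr_sumr sym.
  by apply: sumr_ge0 => k _; exact: sqr_ge0.
have H i j : (P i j - `|P i j|) / 2 <= A i j * P i j.
  case: (eqVneq i j) => [<-|hij].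
    rewrite ger0_norm ?Pdiag // subrr mul0r; exact: mulr_ge0.
  have /andP[a0 a1] := hA i j hij.
  case: (lerP 0 (P i j)) => hp.
    rewrite ger0_norm // subrr mul0r; exact: mulr_ge0.
  rewrite ltr0_norm //; nra.
have -> : \tr (A *m P) = \sum_i \sum_j A i j * P i j.
  by apply: eq_bigr => i _; rewrite mxE; apply: eq_bigr => j _; rewrite sym.
apply: (le_trans _ (ler_sum _ (fun i _ => ler_sum _ (fun j _ => H i j)))).
have -> : \sum_i \sum_j (P i j - `|P i j|) / 2 =
   ((\sum_i \sum_j P i j) - \sum_i \sum_j `|P i j|) / 2.
  rewrite -sumrB mulr_suml; apply: eq_bigr => i _.
  by rewrite -sumrB mulr_suml.
lra.
Qed.

Local Open Scope classical_set_scope.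
Lemma l1_bound (R : realType) r N (Q : 'M[R]_N) : is_proj_rank r Q ->
  (N%:R)^-1 * entry_l1 Q <= (r%:R + 1) / 2.
Proof.
move=> [QQ [QT rk]].
case: N Q QQ QT rk => [|N] Q QQ QT rk.
  rewrite invr0 mul0r; apply: divr_ge0 => //; exact: addr_ge0.
set M : R := N.+1%:R.
have M0 : 0 < M by rewrite ltr0n.
have sym i j : Q j i = Q i j by rewrite -{1}QT mxE.
have sq : \sum_i \sum_j Q i j ^+ 2 = r%:R.
  rewrite -rk -trace_idem //; apply: eq_bigr => i _.
  rewrite -{2}QQ mxE; apply: eq_bigr => j _; by rewrite sym expr2.
have pt (x : R) : `|x| <= (M * x ^+ 2 + M^-1) / 2.
  have h : 0 <= (M * `|x| - 1) ^+ 2 by exact: sqr_ge0.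
  have hx2 : x ^+ 2 = `|x| ^+ 2 by rewrite real_normK ?num_real.
  rewrite hx2.
  have hM : 0 < M^-1 by rewrite invr_gt0.
  rewrite -subr_ge0.
  have -> : (M * `|x| ^+ 2 + M^-1) / 2 - `|x| = M^-1 * (M * `|x| - 1) ^+ 2 / 2.
    field.
  by rewrite paddr_eq0 ?ler0n // oner_eq0.
  apply: divr_ge0 => //; exact: mulr_ge0 (ltW hM) h.
have : entry_l1 Q <= \sum_(i < N.+1) \sum_(j < N.+1) (M * Q i j ^+ 2 + M^-1) / 2.
  by apply: ler_sum => i _; apply: ler_sum => j _; exact: pt.
have -> : \sum_(i < N.+1) \sum_(j < N.+1) (M * Q i j ^+ 2 + M^-1) / 2 =
          (M * (\sum_i \sum_j Q i j ^+ 2) + M * M * M^-1) / 2.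
  have e1 i : \sum_(j < N.+1) (M * Q i j ^+ 2 + M^-1) / 2 =
      (M * \sum_j Q i j ^+ 2 + M^-1 * M) / 2.
    rewrite -mulr_suml big_split /= -mulr_sumr sumr_const card_ord.
    by rewrite mulr_natr.
  rewrite (eq_bigr _ (fun i _ => e1 i)) -mulr_suml big_split /= -mulr_sumr.
  have e2 : M^-1 *+ N.+1 = 1 by rewrite -mulr_natr mulVf // gt_eqF.
  rewrite sumr_const card_ord.
  by rewrite mulVf ?gt_eqF // mulfK ?gt_eqF.
rewrite sq => h.
have hMi : M * M^-1 = 1 by rewrite mulfV // gt_eqF.
rewrite -mulrA hMi mulr1 in h.
rewrite ler_pdivrMl //.
have -> : M * ((r%:R + 1) / 2) = (M * r%:R + M) / 2 by field.
exact: h.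
Qed.

Lemma beta_rN_le (R : realType) r N : beta_rN R r N <= (r%:R + 1) / 2.
Proof.
rewrite /beta_rN.
set S := [set _ | _ in _].
have hb : 0 <= (r%:R + 1) / 2 :> R by apply: divr_ge0 => //; exact: addr_ge0.
case: (pselect (S !=set0)) => [ne|e].
  apply: ge_sup => // y [Q hQ <-]; exact: l1_bound.
by rewrite sup_out // => -[].
Qed.

Lemma beta_ge (R : realType) r N (Q : 'M[R]_N) : (r <= N)%N -> is_proj_rank r Q ->
  N%:R^-1 * entry_l1 Q <= beta_r R r.
Proof.
move=> hN hQ.
apply: (@le_trans _ _ (beta_rN R r N)).
  apply: sup_upper_bound; last by exists Q.
  split; first by exists (N%:R^-1 * entry_l1 Q); exists Q.
  by exists ((r%:R + 1) / 2) => y [Q' hQ' <-]; exact: l1_bound.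
apply: sup_upper_bound; last by exists N.
split; first by exists (beta_rN R r N); exists N.
by exists ((r%:R + 1) / 2) => y [N' _ <-]; exact: beta_rN_le.
Qed.

Local Close Scope classical_set_scope.
Lemma interp (R : fieldType) (s : seq R) (f : R -> R) :
  exists g : {poly R}, forall x, x \in s -> g.[x] = f x.
Proof.
elim: s => [|y s [g hg]]; first by exists 0.
case: (boolP (y \in s)) => ys.
  by exists g => x; rewrite inE => /orP[/eqP->|]; apply: hg.
set w := \prod_(z <- s) ('X - z%:P).
have wy : w.[y] != 0.
  by have := root_prod_XsubC s y; rewrite (negbTE ys) rootE => ->.
exists (g + ((f y - g.[y]) / w.[y]) *: w).
move=> x; rewrite inE hornerD hornerZ => /orP[/eqP->|xs].
  by rewrite divfK // addrC subrK.
have : root w x by rewrite root_prod_XsubC.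
by rewrite rootE => /eqP ->; rewrite mulr0 addr0 hg.
Qed.

Lemma horner_tr (R : comNzRingType) n (A : 'M[R]_n.+1) (p : {poly R}) :
  A^T = A -> (horner_mx A p)^T = horner_mx A p.
Proof.
move=> AT; elim/poly_ind: p => [|p c IH]; first by rewrite rmorph0 trmx0.
rewrite rmorphD rmorphM /= horner_mx_X horner_mx_C linearD /= tr_scalar_mx.
rewrite -mulmxE trmx_mul IH AT.
by congr (_ + _); apply: comm_mx_horner; exact: comm_mx_refl.
Qed.

Lemma horner_conj (F : comNzRingType) n (V W D : 'M[F]_n.+1) q :
  W *m V = 1%:M -> V *m W = 1%:M ->
  horner_mx (V *m D *m W) q = V *m horner_mx D q *m W.
Proof.
move=> WV VW; elim/poly_ind: q => [|q c IH].
  by rewrite !rmorph0 mulmx0 mul0mx.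
rewrite !rmorphD !rmorphM /= !horner_mx_X !horner_mx_C IH -!mulmxE.
rewrite mulmxDr mulmxDl; congr (_ + _).
  by rewrite !mulmxA -(mulmxA _ W V) WV mulmx1.
by rewrite mul_mx_scalar -scalemxAl VW scalemx1.
Qed.

Lemma char_poly_conj (F : comNzRingType) n (V W D : 'M[F]_n) :
  W *m V = 1%:M -> V *m W = 1%:M ->
  char_poly (V *m D *m W) = char_poly D.
Proof.
move=> WV VW.
have VW' : (map_mx polyC V) *m (map_mx polyC W) = 1%:M by rewrite -map_mxM VW map_mx1.
rewrite /char_poly /char_poly_mx.
have -> : 'X%:M - (map_mx polyC (V *m D *m W)) =
    (map_mx polyC V) *m ('X%:M - (map_mx polyC D)) *m (map_mx polyC W).
  rewrite mulmxBr mulmxBl !map_mxM; congr (_ - _).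
  by rewrite mul_mx_scalar -scalemxAl VW' scalemx1.
rewrite !det_mulmx mulrC mulrA -det_mulmx mulmxE.
have -> : (map_mx polyC W) * (map_mx polyC V) = 1 by rewrite -mulmxE -map_mxM WV map_mx1.
by rewrite det1 mul1r.
Qed.

Lemma spectral_real (R : realType) n (A : 'M[R]_n.+1) : A^T = A ->
  exists e : 'I_n.+1 -> R,
    [/\ char_poly A = \prod_i ('X - (e i)%:P),
        (forall p q : {poly R}, (forall i, p.[e i] = q.[e i]) ->
            horner_mx A p = horner_mx A q) &
        (forall p : {poly R}, \tr (horner_mx A p) = \sum_i p.[e i])].
Proof.
move=> AT.
pose f := real_complex R.
pose A' := map_mx f A.
have A'T : A'^T = A' by rewrite /A' map_trmx AT.
have A'J : map_mx Num.conj A'^T = A'.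
  rewrite A'T /A'; apply/matrixP => i j; rewrite !mxE.
  by apply: conj_Creal; apply/complex_realP; exists (A i j).
have Aherm : A' \is hermsymmx by apply/is_hermitianmxP; rewrite expr0 scale1r A'J.
have Anorm : A' \is normalmx by apply: hermitian_normalmx.
set U := spectralmx A'; set d := spectral_diag A'.
have hU : U \is unitarymx := spectral_unitarymx A'.
have EA : A' = map_mx Num.conj U^T *m diag_mx d *m U.
  by rewrite -invmx_unitary //; exact/orthomx_spectralP.
have UU : U *m map_mx Num.conj U^T = 1%:M := unitarymxP hU.
have UU' : map_mx Num.conj U^T *m U = 1%:M := mulmx1C UU.
have dreal : d \is a realmx := hermitian_spectral_diag_real Aherm.
pose e i : R := @complex.Re R (d 0 i).
have de i : d 0 i = f (e i) by rewrite /e /f RRe_real //; exact: (mxOverP dreal).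
have key p : map_mx f (horner_mx A p) =
    map_mx Num.conj U^T *m diag_mx (\row_i f p.[e i]) *m U.
  rewrite map_horner_mx -/A' EA horner_conj // horner_mx_diag.
  by congr (_ *m diag_mx _ *m _); apply/rowP => i; rewrite !mxE de horner_map.
exists e; split.
- apply: (@map_poly_inj _ _ f).
  rewrite map_char_poly -/A' EA char_poly_conj // char_poly_trig ?diag_mx_is_trig //.
  rewrite rmorph_prod; apply: eq_bigr => i _.
  rewrite mxE eqxx mulr1n de.
  by rewrite /= map_polyXsubC.
- move=> p q hpq; apply: (@map_mx_inj _ _ f); rewrite !key.
  by congr (_ *m diag_mx _ *m _); apply/rowP => i; rewrite !mxE hpq.
- move=> p; apply: (@fmorph_inj _ _ f) => /=.

  transitivity (\tr (map_mx f (horner_mx A p))).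
    by rewrite rmorph_sum; apply: eq_bigr => i _; rewrite mxE.
  rewrite key mxtrace_mulC mulmxA UU mul1mx mxtrace_diag rmorph_sum.
  by apply: eq_bigr => i _; rewrite mxE.
Qed.

Lemma comb (R : realFieldType) n r (lam : 'I_n.+1 -> R) (j0 : 'I_n.+1) :
  (r <= n.+1)%N -> (forall i j : 'I_n.+1, (i <= j)%N -> lam j <= lam i) ->
  nat_of_ord j0 = (n.+1 - r)%N ->
  [/\ \sum_i (((lam i < lam j0)%R)%:R : R) <= r%:R,
     r%:R - \sum_i (((lam i < lam j0)%R)%:R : R) <= \sum_i (((lam i == lam j0)%R)%:R : R) &
     \sum_(i < n.+1 | (n.+1 - r <= i)%N) lam i =
       \sum_i ((lam i < lam j0)%R)%:R * lam i + lam j0 * (r%:R - \sum_i (((lam i < lam j0)%R)%:R : R))].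
Proof.
move=> hrn hs hj0.
set mu := lam j0.
pose t (i : 'I_n.+1) := (n.+1 - r <= i)%N.
have ha i : lam i < mu -> t i.
  rewrite /t -hj0; case: leqP => // hi; rewrite /mu.
  by have := hs i j0 (ltnW hi); rewrite leNgt => /negbTE ->.
have hb i : t i -> lam i <= mu by rewrite /t -hj0 => hi; exact: hs.
have hc : \sum_i ((t i)%:R : R) = r%:R.
  transitivity (\sum_(i < n.+1 | t i) (1 : R)).
    by rewrite [RHS]big_mkcond /=; apply: eq_bigr => i _; case: (t i).
  have := @big_geq_mkord R 0 +%R (n.+1 - r) n.+1 xpredT (fun _ => 1).
  by rewrite sumr_const_nat subKn // => ->.
split.
- rewrite -hc; apply: ler_sum => i _.
  case: (boolP (lam i < mu)) => h; last by case: (t i).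
  by rewrite ha.
- rewrite -hc lerBlDr -big_split /=; apply: ler_sum => i _.
  case: (boolP (t i)) => ti //=; last by apply: addr_ge0.
  have := hb i ti; rewrite le_eqVlt => /orP[/eqP->|h].
    by rewrite ltxx eqxx addr0.
  by rewrite h lt_eqF // add0r.
- rewrite big_mkcond /= -hc -sumrB mulr_sumr -big_split /=.
  apply: eq_bigr => i _.
  case: (boolP (t i)) => ti /=.
    rewrite (ti : (_ <= _)%N).
    have := hb i ti; rewrite le_eqVlt => /orP[/eqP ->|h].
      by rewrite ltxx /= mulr0n mul0r subr0 mulr1 add0r.
    by rewrite h /= mulr1n mul1r subrr mulr0 addr0.
  rewrite (negbTE (ti : ~~ (_ <= _)%N)).
  case: (boolP (lam i < mu)) => h; first by have := ha i h; rewrite (negbTE ti).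
  by rewrite /= mulr0n mul0r add0r subrr mulr0.
Qed.

Lemma exists_proj (R : realType) r n (A : 'M[R]_n.+1) (lam : 'I_n.+1 -> R) :
  (1 <= r)%N -> (r <= n.+1)%N -> A^T = A -> sorted_eigenvalues A lam ->
  exists P, is_proj_rank r P /\ \tr (A *m P) = \sum_(i < n.+1 | (n.+1 - r <= i)%N) lam i.
Proof.
move=> r1 rn AT [hchar hsort].
have [e [che heq htr]] := @spectral_real R n A AT.
have pe : perm_eq [seq lam i | i <- index_enum 'I_n.+1] [seq e i | i <- index_enum 'I_n.+1].
  by apply: prod_XsubC_eq; rewrite !big_map -che -hchar.
have hsum (F : R -> R) : \sum_i F (lam i) = \sum_i F (e i).
  have := @perm_big R +%R 0 _ _ _ xpredT F pe.
  rewrite !big_map => ->; by [].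
have j0lt : (n.+1 - r < n.+1)%N by lia.
pose j0 : 'I_n.+1 := Ordinal j0lt.
have [C1 C2 C3] := @comb R n r lam j0 rn hsort (erefl _).
set mu := lam j0 in C1 C2 C3.
have [g hg] := @interp R [seq e i | i <- index_enum 'I_n.+1] (fun x => ((x < mu)%R)%:R).
have [h hh] := @interp R [seq e i | i <- index_enum 'I_n.+1] (fun x => ((x == mu)%R)%:R).
have {}hg i : g.[e i] = ((e i < mu)%R)%:R by apply: hg; apply: map_f; exact: mem_index_enum.
have {}hh i : h.[e i] = ((e i == mu)%R)%:R by apply: hh; apply: map_f; exact: mem_index_enum.
set P1 := horner_mx A g.
set Pe := horner_mx A h.
have P1P1 : P1 *m P1 = P1.
  rewrite mulmxE -rmorphM; apply: heq => i; rewrite hornerM hg.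
  by case: (e i < mu)%R; rewrite ?mulr1 ?mulr0.
have PePe : Pe *m Pe = Pe.
  rewrite mulmxE -rmorphM; apply: heq => i; rewrite hornerM hh.
  by case: (e i == mu)%R; rewrite ?mulr1 ?mulr0.
have P1T : P1^T = P1 by exact: horner_tr.
have PeT : Pe^T = Pe by exact: horner_tr.
have P1Pe : P1 *m Pe = 0.
  rewrite mulmxE -rmorphM -(rmorph0 (horner_mx A)); apply: heq => i.
  rewrite hornerM hg hh horner0.
  by case: (boolP (e i < mu)%R) => h1; rewrite ?(lt_eqF h1) ?mulr0 ?mul0r.
have PeA : Pe *m A = mu *: Pe.
  have -> : Pe *m A = horner_mx A (h * 'X) by rewrite rmorphM /= horner_mx_X.
  have -> : mu *: Pe = horner_mx A (mu%:P * h).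
    by rewrite rmorphM /= horner_mx_C -mulmxE mul_scalar_mx.
  apply: heq => i; rewrite !hornerM hornerX hornerC hh.
  by case: (boolP (e i == mu)%R) => [/eqP->|_]; rewrite ?mulr0 ?mul0r ?mulr1 ?mul1r.
have trAP1 : \tr (A *m P1) = \sum_i ((e i < mu)%R)%:R * e i.
  have -> : A *m P1 = horner_mx A ('X * g) by rewrite rmorphM /= horner_mx_X.
  rewrite htr; apply: eq_bigr => i _.
  by rewrite hornerM hornerX hg mulrC.
have trP1 : \tr P1 = \sum_i ((e i < mu)%R)%:R by rewrite htr; apply: eq_bigr => i _; rewrite hg.
have trPe : \tr Pe = \sum_i ((e i == mu)%R)%:R by rewrite htr; apply: eq_bigr => i _; rewrite hh.
set k := \rank P1.
set m := \rank Pe.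
have hk : k%:R = \sum_i ((lam i < mu)%R)%:R :> R.
  by rewrite -trace_idem // trP1 (hsum (fun x => ((x < mu)%R)%:R)).
have hm : m%:R = \sum_i ((lam i == mu)%R)%:R :> R.
  by rewrite -trace_idem // trPe (hsum (fun x => ((x == mu)%R)%:R)).
have hkr : (k <= r)%N by rewrite -(ler_nat R) hk.
set s := (r - k)%N.
have hs : s%:R = r%:R - k%:R :> R by rewrite natrB.
have hsm : (s <= m)%N by rewrite -(ler_nat R) hs hm hk.
pose RB := row_base Pe.
pose B : 'M_(s, n.+1) := pid_mx s *m RB.
have Bfree : row_free B.
  by rewrite /row_free /B mxrankMfree ?row_base_free // rank_pid_mx.
have [X hX] : exists X, RB = X *m Pe by apply/submxP; rewrite /RB eq_row_base.
have BA : B *m A = mu *: B by rewrite /B hX -!mulmxA PeA !scalemxAr.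
have P1B : P1 *m B^T = 0.
  rewrite /B hX !trmx_mul PeT.
  by rewrite !mulmxA P1Pe !mul0mx.
have BP1 : B *m P1 = 0 by rewrite -[B *m P1]trmxK trmx_mul P1T P1B trmx0.
clearbody B.
have Gu := @rowfree_unit R _ _ B Bfree.
pose G := invmx (B *m B^T).
have GT : G^T = G by rewrite /G trmx_inv trmx_mul trmxK.
have GV : B *m B^T *m G = 1%:M by rewrite /G mulmxV.
have VG : G *m (B *m B^T) = 1%:M by rewrite /G mulVmx.
clearbody G.
pose F := B^T *m G *m B.
exists (P1 + F); split; last first.
  rewrite mulmxDr mxtraceD trAP1 -(hsum (fun x => ((x < mu)%R)%:R * x)) C3.
  congr (_ + _).
  rewrite /F !mulmxA mxtrace_mulC !mulmxA BA -!scalemxAl mxtraceZ.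
  rewrite GV mxtrace1.
  by rewrite hs hk.
have FF : F *m F = F.
  by rewrite /F !mulmxA -(mulmxA (B^T *m G) B B^T) -(mulmxA B^T G (B *m B^T)) VG mulmx1.
have P1F : P1 *m F = 0 by rewrite /F !mulmxA P1B !mul0mx.
have FP1 : F *m P1 = 0 by rewrite /F -mulmxA BP1 mulmx0.
have FT : F^T = F by rewrite /F !trmx_mul trmxK GT mulmxA.
have PP : (P1 + F) *m (P1 + F) = P1 + F.
  by rewrite mulmxDr !mulmxDl P1P1 FF P1F FP1 addr0 add0r.
split => //; split; first by rewrite linearD /= P1T FT.
apply/eqP; rewrite -(eqr_nat R) -trace_idem // mxtraceD -/k.
rewrite trace_idem // -/k.
have -> : \tr F = s%:R.
  by rewrite /F mxtrace_mulC mulmxA GV mxtrace1.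
by rewrite -natrD subnKC.
Qed.

Theorem theorem2p1 (R : realType) (r n : nat) (A : 'M[R]_n) (lam : 'I_n -> R) :
  (1 <= r)%N -> (r <= n)%N ->
  A^T = A ->
  (forall i j : 'I_n, i != j -> 0 <= A i j <= 1) ->
  (forall i : 'I_n, 0 <= A i i) ->
  sorted_eigenvalues A lam ->
  \sum_(i < n | (n - r <= i)%N) lam i >= - (beta_r R r / 2) * n%:R.
Proof.
case: n A lam => [|n] A lam r1 rn AT hA hAd hsort.
  by have := leq_trans r1 rn.
have [P [hP htr]] := @exists_proj R r n A lam r1 rn AT hsort.
have [PP [PT _]] := hP.
have hl := @tr_lower R n.+1 A P hA hAd PT PP.
have hb := @beta_ge R r n.+1 P rn hP.
rewrite -htr.
have hn : 0 < n.+1%:R :> R by rewrite ltr0n.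
move: hb hl; rewrite /entry_l1; set L := \sum_i \sum_j _; set b := beta_r R r.
rewrite mulrC ler_pdivrMr // => hb hl.
nra.
Qed.
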